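(* Let $d\ge 3$ and $h\ge 1$. The exponent of the sandpile group $G(d,h)$ equals $$(d-1)^h\cdot \operatorname{lcm}\{\,d\,\theta(d,h+1),\ \theta(d,h),\ \theta(d,h-1),\ \dots,\ \theta(d,2)\,\},$$ where $\theta(d,n) := \frac{(d-1)^n-1}{d-2}$.
   Context: Let $\mathcal{T}(d,h)$ be the rooted tree in which the root $0$ has $d$ children, every vertex at distance $1,\dots,h-1$ from the root has $d-1$ children, and the vertices at distance $h$ (leaves) have no children (the ball of radius $h$ in the infinite $d$-regular tree). Let $V$ be its vertex set, $A$ its adjacency matrix, $\Delta := dI-A$, and $\Lambda\subset\mathbb{Z}^V$ the lattice spanned by the rows of $\Delta$. Then $G(d,h) := \mathbb{Z}^V/\Lambda$. The exponent of a finite abelian group is the least common multiple of the orders of its elements (equivalently the largest order of an element). *)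

(* Defs.v *)
From mathcomp Require Import all_boot all_order all_algebra.
Set Implicit Arguments. Unset Strict Implicit. Unset Printing Implicit Defensive.
Import Order.TTheory GRing.Theory Num.Theory.

(* Vertices of T(d,h) are encoded as sequences of child indices along the
   path from the root: the root is [::]; the root's children are [:: i]
   with i < d; a vertex s at depth k (1 <= k < h) has children rcons s i
   with i < d-1. *)
Fixpoint tree_level (d k : nat) : seq (seq nat) :=
  match k with
  | 0 => [:: [::]]
  | 1 => [seq [:: i] | i <- iota 0 d]
  | k'.+1 => [seq rcons s i | s <- tree_level d k', i <- iota 0 d.-1]
  end.

Definition tree_verts (d h : nat) : seq (seq nat) :=
  flatten [seq tree_level d k | k <- iota 0 h.+1].

Definition tree_parent (u v : seq nat) : bool :=
  (v != [::]) && (take (size v).-1 v == u).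

Definition tree_adj (u v : seq nat) : bool := tree_parent u v || tree_parent v u.

Definition Delta (d : nat) (u v : seq nat) : int :=
  (d%:Z * (u == v)%:Z - (tree_adj u v)%:Z)%R.

(* x (an element of Z^V, given by its values on V) lies in the lattice
   Lambda spanned by the rows of Delta. *)
Definition in_Lambda (d h : nat) (x : seq nat -> int) : Prop :=
  exists c : seq nat -> int, forall v, v \in tree_verts d h ->
    x v = (\sum_(u <- tree_verts d h) c u * Delta d u v)%R.

Definition annihilates (d h e : nat) : Prop :=
  forall x : seq nat -> int, in_Lambda d h (fun v => (e%:Z * x v)%R).

Definition is_exponent_G (d h e : nat) : Prop :=
  0 < e /\ annihilates d h e /\ forall e', 0 < e' -> annihilates d h e' -> e <= e'.

(* theta(d,n) = ((d-1)^n - 1)/(d-2)  (exact division for d >= 3) *)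
Definition theta (d n : nat) : nat := ((d.-1) ^ n - 1) %/ (d - 2).

Definition lcm_seq (s : seq nat) : nat := foldr lcmn 1 s.

(* Main.v *)
Require Import Defs.
From mathcomp Require Import all_boot all_order all_algebra.
From mathcomp Require Import zify ring lra.
Set Implicit Arguments. Unset Strict Implicit. Unset Printing Implicit Defensive.
Import Order.TTheory GRing.Theory Num.Theory.

Local Close Scope ring_scope.

Definition valid (d : nat) (s : seq nat) : bool :=
  if s is a :: t then (a < d) && all (fun i => i < d.-1) t else true.

Lemma valid_rcons d s i :
  valid d (rcons s i) = valid d s && (i < (if s is [::] then d else d.-1)).
Proof.
case: s => [|a t]; first by rewrite /= andbT.
rewrite rcons_cons /= all_rcons.
by case: (a < d); case: (i < d.-1); case: (all _ t).
Qed.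

Lemma mem_level d k s : (s \in tree_level d k) = (size s == k) && valid d s.
Proof.
elim: k s => [|k IH] s.
  by rewrite /= mem_seq1; case: s.
case: k IH => [|k] IH.
  rewrite /=; apply/mapP/idP.
    by case=> i; rewrite mem_iota => /andP[_ hi] ->; rewrite /= hi.
  case: s => [|a [|b t]] //=; rewrite andbT => ha.
  by exists a => //; rewrite mem_iota.
case/lastP: s => [|s x].
  apply/negbTE/negP => /= /allpairsP[[p1 p2] [_ _]] /=.
  by case: p1 => [|? ?].
rewrite size_rcons eqSS valid_rcons.
have -> : tree_level d k.+2 = [seq rcons s0 i | s0 <- tree_level d k.+1, i <- iota 0 d.-1] by [].
apply/allpairsP/idP.
  case=> [[p1 p2] [/= h1 h2 /rcons_inj [-> ->]]].
  move: h1; rewrite IH => /andP[/eqP hs ->]; rewrite hs eqxx /=.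
  by case: p1 hs => [|? ?] //= _; move: h2; rewrite mem_iota.
move=> /and3P[hs hv hx].
exists (s, x); split => //; first by rewrite IH hs hv.
by rewrite mem_iota /=; move/eqP: hs hx; case: (s) => [|? ?].
Qed.

Lemma uniq_level d k : uniq (tree_level d k).
Proof.
elim: k => [|k IH] //.
case: k IH => [|k] IH.
  by rewrite /= map_inj_uniq ?iota_uniq // => a b [].
have -> : tree_level d k.+2 = [seq rcons s0 i | s0 <- tree_level d k.+1, i <- iota 0 d.-1] by [].
apply: allpairs_uniq => //; first exact: iota_uniq.
by move=> [a b] [c e] _ _ /= /rcons_inj [-> ->].
Qed.

Lemma mem_verts d h s : (s \in tree_verts d h) = valid d s && (size s <= h).
Proof.
apply/flatten_mapP/idP.
  case=> k; rewrite mem_iota mem_level => /andP[_ hk] /andP[/eqP -> ->].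
  by rewrite /= -ltnS.
move=> /andP[hv hs]; exists (size s); first by rewrite mem_iota.
by rewrite mem_level eqxx.
Qed.

Lemma uniq_verts d h : uniq (tree_verts d h).
Proof.
rewrite /tree_verts; elim: h.+1 => [|n IH] //.
rewrite -addn1 iotaD map_cat flatten_cat cat_uniq IH /= cats0 uniq_level andbT.
apply/hasPn => s; rewrite mem_level => /andP[/eqP hs _].
apply/negP => /flatten_mapP [k]; rewrite mem_iota mem_level => /andP[_ hk] /andP[/eqP hk' _].
by move: hk; rewrite -hk' hs add0n ltnn.
Qed.

Local Close Scope ring_scope.

Definition par (v : seq nat) := take (size v).-1 v.
Definition nch (d h : nat) (v : seq nat) : nat :=
  if size v < h then (if v is [::] then d else d.-1) else 0.

Lemma valid_take d n s : valid d s -> valid d (take n s).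
Proof.
case: s => [|a t] //=; case: n => [|n] //= /andP[-> /allP ht] /=.
by apply/allP => x /mem_take /ht.
Qed.

Lemma par_mem d h v : v \in tree_verts d h -> par v \in tree_verts d h.
Proof.
rewrite !mem_verts => /andP[hv hs]; rewrite valid_take //= size_take.
by case: ifP => // _; apply: leq_trans hs; case: (size v).
Qed.

Lemma par_rcons v i : par (rcons v i) = v.
Proof. by rewrite /par size_rcons /= -cats1 take_size_cat. Qed.

Definition children d h v := [seq rcons v i | i <- iota 0 (nch d h v)].

Lemma children_uniq d h v : uniq (children d h v).
Proof. by rewrite map_inj_uniq ?iota_uniq //; apply: rcons_injr. Qed.

Lemma children_mem d h v u : v \in tree_verts d h ->
  (u \in children d h v) = (u \in tree_verts d h) && tree_parent v u.
Proof.
move=> hv; rewrite /tree_parent; case/lastP: u => [|u x].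
  by rewrite /=; apply/negbTE/negP => /mapP [i _]; case: (v).
rewrite size_rcons /= -cats1 take_size_cat // cats1.
move: hv; rewrite !mem_verts valid_rcons size_rcons /children /nch => /andP[hv hs].
have -> : rcons u x != [::] by case: u.
apply/mapP/idP.
  case=> i; rewrite mem_iota add0n => hi /rcons_inj [-> ->].
  rewrite eqxx hv /= andbT.
  by case: ifP hi => //= _; rewrite andbT.
move=> /and3P[/andP[/andP[hu hx] hsu] _ /eqP eu]; subst u.
exists x => //; rewrite mem_iota add0n hsu.
by case: (v) hx.
Qed.

Local Open Scope ring_scope.

Lemma sum_delta (R : pzRingType) (s : seq (seq nat)) x (F : seq nat -> R) :
  uniq s -> x \in s -> \sum_(u <- s) F u * (u == x)%:R = F x.
Proof.
move=> us xs; rewrite (bigD1_seq x) //= eqxx mulr1 big1 ?addr0 //.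
by move=> u /negbTE ->; rewrite mulr0.
Qed.

Lemma local (R : comPzRingType) d h (g : seq nat -> R) v :
  v \in tree_verts d h ->
  \sum_(u <- tree_verts d h) g u * (Delta d u v)%:~R =
  d%:R * g v - (if v is [::] then 0 else g (par v))
    - \sum_(u <- children d h v) g u.
Proof.
move=> hv.
have E : forall u, (Delta d u v)%:~R = d%:R * (u == v)%:R
            - (tree_parent u v)%:R - (tree_parent v u)%:R :> R.
  move=> u; rewrite /Delta /tree_adj.
  have nb : ~~ (tree_parent u v && tree_parent v u).
    apply/negP; rewrite /tree_parent => /andP[/andP[n1 /eqP e1] /andP[n2 /eqP e2]].
    have := congr1 size e1; have := congr1 size e2; rewrite !size_take_min.
    move: n1 n2; rewrite -!size_eq0; case: (size v) => [|a]; case: (size u) => [|b] //= _ _; lia.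
  case: (tree_parent u v) (tree_parent v u) nb => [] [] //= _;
    rewrite ?intrB ?intrM /= ?mulr1 ?mulr0 ?subr0 //.
rewrite (eq_bigr (fun u => g u * (d%:R * (u == v)%:R) + (- (g u * (tree_parent u v)%:R))
   + (- (g u * (tree_parent v u)%:R)))); last by move=> u _; rewrite E !mulrBr.
rewrite !big_split /= !sumrN.
congr (_ - _ - _).
- under eq_bigr do rewrite mulrCA.
  by rewrite -mulr_sumr sum_delta // uniq_verts.
- clear E; case: v hv => [|a t] hv.
    by rewrite big1 // => u _; rewrite /tree_parent /= mulr0.
  rewrite -(sum_delta g (uniq_verts d h) (par_mem hv)).
  apply: eq_bigr => u _; congr (_ * _%:R).
  by rewrite /tree_parent /= eq_sym.
- rewrite [LHS](eq_bigr (fun u => if tree_parent v u then g u else 0)); last first.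
    by move=> u _; case: (tree_parent v u); rewrite /= ?mulr1n ?mulr0n ?mulr1 ?mulr0.
  rewrite -big_mkcond -big_filter; apply: perm_big; apply: uniq_perm.
  + by apply: filter_uniq; apply: uniq_verts.
  + exact: children_uniq.
  by move=> u; rewrite mem_filter children_mem // andbC.
Qed.

Local Close Scope ring_scope.

Fixpoint lcp (s t : seq nat) : nat :=
  match s, t with
  | a :: s', b :: t' => if a == b then (lcp s' t').+1 else 0
  | _, _ => 0
  end.

Lemma lcp_le s t : lcp s t <= size s.
Proof. elim: s t => [|a s IH] [|b t] //=; case: ifP => //= _; exact: IH. Qed.

Lemma lcp_le2 s t : lcp s t <= size t.
Proof. elim: s t => [|a s IH] [|b t] //=; case: ifP => //= _; exact: IH. Qed.

Lemma lcp_take n s t : lcp (take n s) t = minn n (lcp s t).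
Proof.
elim: s n t => [|a s IH] [|n] [|b t] //=; rewrite ?minn0 ?min0n //.
by case: ifP => _; rewrite ?IH ?minnSS ?minn0.
Qed.

Lemma lcp_rcons s x t : lcp (rcons s x) t =
  if lcp s t == size s then size s + ((size s < size t) && (nth 0 t (size s) == x))
  else lcp s t.
Proof.
elim: s t => [|a s IH] [|b t] //=.
  by rewrite eq_sym; case: ifP.
case: ifP => _ //=; rewrite IH eqSS; case: ifP => //.
Qed.

Lemma lcp_full s t : lcp s t = size s -> s = take (size s) t.
Proof.
elim: s t => [|a s IH] [|b t] //=; case: ifP => // /eqP -> [] /IH <- //.
Qed.

Lemma lcp_eq s t : lcp s t = size s -> size s = size t -> s = t.
Proof. by move=> /lcp_full e es; rewrite {1}e es take_size. Qed.

Lemma lcp_refl s : lcp s s = size s.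
Proof. by elim: s => //= a s ->; rewrite eqxx. Qed.

Local Close Scope ring_scope.

Fixpoint NN (d k : nat) : nat := if k is k'.+1 then d.-1 * NN d k' + 1 else 0.
Local Open Scope ring_scope.
Definition NQ (d k : nat) : rat := (NN d k)%:R.
Fixpoint aa (d h m : nat) : rat :=
  if m is m'.+1 then aa d h m' + 1 / (NQ d (h.+1 - m') * NQ d (h - m'))
  else 1 / (d%:R * (d.-1)%:R ^+ h * NQ d h.+1).

Lemma NQ0 d : NQ d 0 = 0. Proof. by []. Qed.
Lemma NQS d k : NQ d k.+1 = (d.-1)%:R * NQ d k + 1.
Proof. by rewrite /NQ /= natrD natrM. Qed.
Lemma NQ_gt0 d k : (0 < k)%N -> 0 < NQ d k.
Proof. by case: k => // k _; rewrite /NQ /= addn1 ltr0Sn. Qed.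
Lemma NQ_neq0 d k : (0 < k)%N -> NQ d k != 0.
Proof. by move=> /(NQ_gt0 d) /lt0r_neq0. Qed.
Lemma dq d : (0 < d)%N -> d%:R = (d.-1)%:R + 1 :> rat.
Proof. by case: d => // d _; rewrite -natr1. Qed.
Lemma NQ_diff d k : NQ d k.+1 - NQ d k = (d.-1)%:R ^+ k.
Proof.
elim: k => [|k IH]; first by rewrite NQS NQ0 mulr0 add0r subr0.
by rewrite exprS -IH !NQS; ring.
Qed.
Lemma id_off d k : (0 < d)%N ->
  d%:R * NQ d k.+1 = NQ d k.+2 + (d.-1)%:R * NQ d k.
Proof. by move=> hd; rewrite dq // !NQS; ring. Qed.

Lemma qq d : (1 < d)%N -> (d.-1).-1%:R = (d.-1)%:R - 1 :> rat.
Proof. by case: d => [|[|d]] // _; rewrite /= -natr1 addrK. Qed.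

Lemma id_mid d h j : (1 < d)%N -> (0 < j)%N -> (j < h)%N ->
  d%:R * (aa d h j * NQ d (h.+1 - j)) - aa d h j.-1 * NQ d (h.+1 - j.-1)
  - (aa d h j.+1 * NQ d (h - j) + (d.-1).-1%:R * (aa d h j * NQ d (h - j))) = 0.
Proof.
move=> hd hj hjh.
have [k ek] : exists k, h = (j + k.+1)%N by exists (h - j.+1)%N; lia.
subst h; case: j hj hjh => // i _ _.
have e1 : ((i.+1 + k.+1).+1 - i.+1 = k.+2)%N by lia.
have e2 : ((i.+1 + k.+1).+2 - i.+1 = k.+3)%N by lia.
have e3 : ((i.+1 + k.+1) - i.+1 = k.+1)%N by lia.
have e4 : ((i.+1 + k.+1).+1 - i = k.+3)%N by lia.
have e5 : ((i.+1 + k.+1) - i = k.+2)%N by lia.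
rewrite /= e1 e3 e4 e5.
have n1 := NQ_neq0 d (ltn0Sn k).
have n2 := NQ_neq0 d (ltn0Sn k.+1).
have n3 := NQ_neq0 d (ltn0Sn k.+2).
move: n1 n2 n3; rewrite [NQ d k.+3]NQS [NQ d k.+2]NQS => n1 n2 n3.
rewrite (qq hd) (dq (ltnW hd)).
move: n1 n2 n3; set q := (d.-1)%:R; set N := NQ d k.+1; set A := aa _ _ _ => n1 n2 n3.
by field; rewrite ?n1 ?n2 ?n3.
Qed.

Lemma id_root d h : (1 < d)%N -> (0 < h)%N ->
  d%:R * (aa d h 0 * NQ d (h.+1 - 0)) - 0
  - (aa d h 1 * NQ d (h - 0) + (d.-1)%:R * (aa d h 0 * NQ d (h - 0))) = 0.
Proof.
move=> hd hh; rewrite !subn0 /= subn0.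
have n1 := NQ_neq0 d hh.
have n2 := NQ_neq0 d (ltn0Sn h).
have nd : d%:R != 0 :> rat by rewrite pnatr_eq0 -lt0n ltnW.
have nq : (d.-1)%:R != 0 :> rat by rewrite pnatr_eq0 -lt0n; case: (d) hd => [|[|]].
have ex : (d.-1)%:R ^+ h = NQ d h.+1 - NQ d h by rewrite NQ_diff.
have nx : (d.-1)%:R ^+ h != 0 :> rat by rewrite expf_neq0.
move: nx; rewrite ex => nx.
rewrite (dq (ltnW hd)) in nd *.
rewrite subn0; by field; rewrite ?n1 ?n2 ?nd ?nx.
Qed.

Lemma id_leaf d h : (1 < d)%N -> (0 < h)%N ->
  d%:R * (aa d h h * NQ d (h.+1 - h)) - aa d h h.-1 * NQ d (h.+1 - h.-1) - 0 = 1.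
Proof.
move=> hd; case: h => // i _.
have e1 : (i.+2 - i.+1 = 1)%N by lia.
have e2 : (i.+2 - i = 2)%N by lia.
have e3 : (i.+1 - i = 1)%N by lia.
rewrite /= e1 e2 e3 !NQS NQ0 mulr0 add0r mulr1.
have nd : d%:R != 0 :> rat by rewrite pnatr_eq0 -lt0n ltnW.
rewrite (dq (ltnW hd)) in nd *.
by field.
Qed.

Local Close Scope ring_scope.

Lemma valid_nth d l j : valid d l -> (j < size l)%N ->
  (nth 0%N l j < (if j == 0%N then d else d.-1))%N.
Proof.
case: l => [|a t] //= /andP[ha /allP ht]; case: j => //= j hj.
by apply: ht; rewrite mem_nth.
Qed.

Local Open Scope ring_scope.

Definition ff d h l u : rat := aa d h (lcp u l) * NQ d (h.+1 - size u).

Lemma sum_iota_const n (c : rat) : \sum_(i <- iota 0 n) c = n%:R * c.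
Proof. by have := sumr_const_nat n 0 c; rewrite /index_iota subn0 => ->; rewrite mulr_natl. Qed.

Lemma sum_delta_nat n c : (c < n)%N -> \sum_(i <- iota 0 n) ((c == i)%:R : rat) = 1.
Proof.
move=> hc; rewrite (bigD1_seq c) ?mem_iota ?iota_uniq //= eqxx big1 ?addr0 //.
by move=> i /negbTE; rewrite eq_sym => ->.
Qed.

Lemma sum_iota_delta n c j (F : nat -> rat) : (c < n)%N ->
  \sum_(i <- iota 0 n) F (j + (c == i))%N = F j.+1 + (n.-1)%:R * F j.
Proof.
move=> hc.
rewrite (eq_bigr (fun i => F j + (c == i)%:R * (F j.+1 - F j))); last first.
  by move=> i _; case: (c == i); rewrite /= ?addn1 ?addn0 ?mul1r ?mul0r ?addr0 //; ring.
rewrite big_split /= -big_distrl /= sum_iota_const sum_delta_nat // mul1r.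
case: n hc => // n _; rewrite /= -natr1; ring.
Qed.

Lemma green d h l v : (2 < d)%N -> (0 < h)%N -> l \in tree_verts d h -> size l = h ->
  v \in tree_verts d h ->
  d%:R * ff d h l v - (if v is [::] then 0 else ff d h l (par v))
  - \sum_(u <- children d h v) ff d h l u = (v == l)%:R.
Proof.
move=> hd hh hl sl hv.
have hv' := hv; rewrite mem_verts in hv'; case/andP: hv' => vv sv.
have hl' := hl; rewrite mem_verts in hl'; case/andP: hl' => vl _.
rewrite /children big_map.
have hm := lcp_le v l.
case: (ltnP (lcp v l) (size v)) => hlt.
-
  have nvl : (v == l) = false.
    by apply/negbTE/eqP => e; move: hlt; rewrite e lcp_refl ltnn.
  rewrite nvl (_ : (false%:R : rat) = 0) //.
  under eq_bigr => i _ do rewrite /ff lcp_rcons (ltn_eqF hlt) size_rcons.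
  rewrite sum_iota_const.
  have -> : (if v is [::] then 0 else ff d h l (par v)) = ff d h l (par v).
    by case: (v) hlt.
  rewrite /ff /par lcp_take size_take_min (minn_idPl (leq_pred _)).
  rewrite (minn_idPr _); last by rewrite -ltnS; case: (size v) hlt.
  have -> : nch d h v = if (size v < h)%N then d.-1 else 0%N.
    by rewrite /nch; case: (v) hlt.
  move: (lcp v l) (size v) hlt sv => m j hlt sv.
  set A := aa d h m.
  case: (ltnP j h) => hjh.
    have [k ek] : exists k, h = (j + k)%N by exists (h - j)%N; lia.
    clear sv.
    rewrite ek; case: j hlt hjh {ek} => // i _ _.
    have e1 : ((i.+1 + k).+1 - i.+1 = k.+1)%N by lia.
    have e2 : ((i.+1 + k).+1 - i = k.+2)%N by lia.
    have e3 : ((i.+1 + k).+1 - i.+2 = k)%N by lia.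
    rewrite e1 e2 e3 /= mulrCA id_off; last by lia.
    by rewrite mulrDr; ring.
  have ejh : j = h by apply/eqP; rewrite eqn_leq sv hjh.
  rewrite -ejh; case: j hlt {hjh sv ejh} => // i _.
  have e1 : (i.+2 - i.+1 = 1)%N by lia.
  have e2 : (i.+2 - i = 2)%N by lia.
  rewrite /= e1 e2 mul0r subr0 mulrCA.
  have := @id_off d 0%N (ltnW (ltnW hd)); rewrite NQ0 mulr0 addr0 => ->.
  by rewrite subrr.
- have el : lcp v l = size v by apply/eqP; rewrite eqn_leq hm hlt.
  under eq_bigr => i _ do rewrite /ff lcp_rcons el eqxx size_rcons sl.
  have hpar : v != [::] -> aa d h (lcp (par v) l) * NQ d (h.+1 - size (par v)) = aa d h (size v).-1 * NQ d (h.+1 - (size v).-1).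
    by move=> nv; rewrite /par lcp_take size_take_min el !(minn_idPl (leq_pred _)).
  rewrite /ff el.
  case: (ltnP (size v) h) => hjh.
    have nvl : (v == l) = false.
      by apply/negbTE/eqP => e; rewrite e sl ltnn in hjh.
    rewrite nvl (_ : (false%:R : rat) = 0) //.
    under eq_bigr => i _ do rewrite andTb.
    have hc : (nth 0%N l (size v) < nch d h v)%N.
      have := valid_nth vl (_ : (size v < size l)%N); rewrite sl => /(_ hjh).
      by rewrite /nch hjh size_eq0; case: (v).
    rewrite (@sum_iota_delta _ _ (size v) (fun m => aa d h m * NQ d (h.+1 - (size v).+1)) hc).
    move: hpar; rewrite /nch hjh.
    case: v {hv vv sv hm hlt nvl el hc} hjh => [|a t] hjh hpar.
      have := @id_root d h (ltnW hd) hh.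
      by move=> H; exact: H.
    rewrite hpar //.
    have := @id_mid d h (size (a :: t)) (ltnW hd) (ltn0Sn _) hjh.
    by move=> H; exact: H.
  have ejh : size v = h by apply/eqP; rewrite eqn_leq sv hjh.
  have evl : (v == l) = true by apply/eqP; apply: lcp_eq el _; rewrite ejh sl.
  rewrite evl /nch ejh ltnn big_nil.
  move: hpar; case: v {hv vv sv hm hlt el evl hjh} ejh => [|a t] ejh hpar.
    by rewrite -ejh in hh.
  rewrite hpar // ejh.
  by have := @id_leaf d h (ltnW hd) hh; move=> H; exact: H.
Qed.

Local Close Scope ring_scope.

Lemma theta_NN d k : 2 < d -> theta d k = NN d k.
Proof.
move=> hd; rewrite /theta.
have -> : ((d.-1) ^ k - 1 = (d - 2) * NN d k)%N.
  elim: k => [|k IH] /=; first by rewrite expn0 muln0.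
  rewrite expnS.
  have hp : 0 < (d.-1) ^ k by rewrite expn_gt0; case: (d) hd => [|[|]].
  move: IH hp; set P := (d.-1) ^ k; set N := NN d k => IH hp.
  have -> : d.-1 = (d - 2).+1 by case: (d) hd => [|[|[|]]].
  move: IH; set r := (d - 2)%N => IH.
  nia.
by rewrite mulKn //; lia.
Qed.

Lemma NN_gt0 d k : 0 < k -> 0 < NN d k.
Proof. by case: k => // k _ /=; rewrite addn1. Qed.

Lemma coprime_NN d k : 2 < d -> 0 < k -> coprime d.-1 (NN d k).
Proof.
move=> hd; case: k => // k _ /=.
rewrite -coprime_modr mulnC modnMDl coprime_modr.
by rewrite /coprime gcdn1.
Qed.

Lemma dvd_lcm_seq s x : x \in s -> x %| lcm_seq s.
Proof.
elim: s => [|a s IH] //=; rewrite inE => /orP[/eqP ->|/IH h].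
  exact: dvdn_lcml.
exact: dvdn_trans h (dvdn_lcmr _ _).
Qed.

Lemma lcm_seq_dvd s n : (forall x, x \in s -> x %| n) -> lcm_seq s %| n.
Proof.
elim: s => [|a s IH] //= H; rewrite dvdn_lcm H ?mem_head //=.
by apply: IH => x hx; apply: H; rewrite inE hx orbT.
Qed.

Lemma lcm_seq_gt0 s : (forall x, x \in s -> 0 < x) -> 0 < lcm_seq s.
Proof.
elim: s => [|a s IH] //= H; rewrite lcmn_gt0 H ?mem_head //=.
by apply: IH => x hx; apply: H; rewrite inE hx orbT.
Qed.

Lemma coprime_lcm_seq p s : (forall x, x \in s -> coprime p x) -> coprime p (lcm_seq s).
Proof.
elim: s => [|a s IH] //= H; first by rewrite /coprime gcdn1.
apply: (@coprime_dvdr _ (a * lcm_seq s)); first by rewrite dvdn_lcm dvdn_mulr ?dvdn_mull.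
rewrite coprimeMr H ?mem_head //=.
by apply: IH => x hx; apply: H; rewrite inE hx orbT.
Qed.

Definition LL d h := lcm_seq (d * theta d h.+1 :: [seq theta d k | k <- iota 2 h.-1]).

Lemma NN_dvd_LL d h k : 2 < d -> 0 < k -> k <= h.+1 -> NN d k %| LL d h.
Proof.
move=> hd hk hkh.
case: (ltnP 1 k) => h1; last first.
  have -> : k = 1 by lia.
  by rewrite /= muln0 add0n dvd1n.
case: (ltnP k h.+1) => h2.
  apply: dvd_lcm_seq; rewrite inE; apply/orP; right.
  apply/mapP; exists k; last by rewrite theta_NN.
  rewrite mem_iota; lia.
have -> : k = h.+1 by lia.
apply: dvdn_trans (dvd_lcm_seq (mem_head _ _)).
by rewrite theta_NN // dvdn_mull.
Qed.

Local Open Scope ring_scope.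

Definition ee d h := ((d.-1) ^ h * LL d h)%N.

Lemma aa_int d h m : (2 < d)%N -> (0 < h)%N -> (m <= h)%N ->
  exists z : int, (ee d h)%:R * aa d h m = z%:~R.
Proof.
move=> hd hh; elim: m => [|m IH] hm.
  have : (d * NN d h.+1 %| LL d h)%N.
    by rewrite -theta_NN //; apply: dvd_lcm_seq; apply: mem_head.
  case/dvdnP => t ht; exists t%:Z.
  rewrite /ee ht /= !natrM natrX -/(NQ d h.+1).
  have n1 := NQ_neq0 d (ltn0Sn h).
  have nd : d%:R != 0 :> rat by rewrite pnatr_eq0 -lt0n; lia.
  have nq : (d.-1)%:R != 0 :> rat by rewrite pnatr_eq0 -lt0n; lia.
  have nx : (d.-1)%:R ^+ h != 0 :> rat by rewrite expf_neq0.
  rewrite -pmulrn; by field; rewrite ?n1 ?nd ?nx.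
have [z0 hz0] := IH (ltnW hm).
have [k ek] : exists k, h = (m + k.+1)%N by exists (h - m.+1)%N; lia.
have e1 : (h.+1 - m = k.+2)%N by lia.
have e2 : (h - m = k.+1)%N by lia.
have : (NN d k.+1 %| LL d h)%N by apply: NN_dvd_LL => //; lia.
case/dvdnP => t1 ht1.
have : (NN d k.+2 %| LL d h)%N by apply: NN_dvd_LL => //; lia.
case/dvdnP => t2 ht2.
exists (z0 + ((d.-1) ^ m * t1)%N%:Z - ((d.-1) ^ m * t2)%N%:Z).
rewrite /= mulrDr hz0 !intrD intrN -addrA; congr (_ + _).
rewrite e1 e2 /ee.
have n1 := NQ_neq0 d (ltn0Sn k).
have n2 := NQ_neq0 d (ltn0Sn k.+1).
have ht1' : (t1%:R : rat) = (LL d h)%:R / NQ d k.+1.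
  by rewrite ht1 natrM mulfK.
have ht2' : (t2%:R : rat) = (LL d h)%:R / NQ d k.+2.
  by rewrite ht2 natrM mulfK.
rewrite -!pmulrn !natrM !natrX ht1' ht2'.
rewrite (_ : (d.-1)%:R ^+ h = (d.-1)%:R ^+ m * (NQ d k.+2 - NQ d k.+1)); last first.
  by rewrite NQ_diff -exprD -ek.
by field; rewrite ?n1 ?n2.
Qed.

Local Close Scope ring_scope.
Local Open Scope ring_scope.

Lemma Delta_sym d u v : Delta d u v = Delta d v u.
Proof. by rewrite /Delta eq_sym /tree_adj orbC. Qed.

Lemma green_row d h l v : (2 < d)%N -> (0 < h)%N -> l \in tree_verts d h -> size l = h ->
  v \in tree_verts d h ->
  \sum_(u <- tree_verts d h) ff d h l u * (Delta d u v)%:~R = (v == l)%:R.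
Proof. by move=> hd hh hl sl hv; rewrite local // green. Qed.

Lemma inL_ext d h x y : (forall v, v \in tree_verts d h -> x v = y v) ->
  in_Lambda d h x -> in_Lambda d h y.
Proof. by move=> E [c hc]; exists c => v hv; rewrite -E // hc. Qed.

Lemma inL_add d h x y : in_Lambda d h x -> in_Lambda d h y ->
  in_Lambda d h (fun v => x v + y v).
Proof.
move=> [c1 h1] [c2 h2]; exists (fun u => c1 u + c2 u) => v hv.
by rewrite h1 // h2 // -big_split; apply: eq_bigr => u _; rewrite mulrDl.
Qed.

Lemma inL_scale d h z x : in_Lambda d h x -> in_Lambda d h (fun v => z * x v).
Proof.
move=> [c hc]; exists (fun u => z * c u) => v hv.
by rewrite hc // mulr_sumr; apply: eq_bigr => u _; rewrite mulrA.
Qed.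

Lemma inL_zero d h : in_Lambda d h (fun _ => 0).
Proof. by exists (fun _ => 0) => v _; rewrite big1 // => u _; rewrite mul0r. Qed.

Lemma inL_sum d h (T : eqType) (s : seq T) (X : T -> seq nat -> int) :
  (forall w, w \in s -> in_Lambda d h (X w)) ->
  in_Lambda d h (fun v => \sum_(w <- s) X w v).
Proof.
elim: s => [|a s IH] H.
  by apply: inL_ext (inL_zero d h) => v _; rewrite big_nil.
have H1 := H a (mem_head _ _).
have H2 : in_Lambda d h (fun v => \sum_(w <- s) X w v).
  by apply: IH => w hw; apply: H; rewrite inE hw orbT.
apply: inL_ext (inL_add H1 H2).
by move=> v _; rewrite big_cons.
Qed.

Lemma inL_row d h w : w \in tree_verts d h -> in_Lambda d h (fun v => Delta d w v).
Proof.
move=> hw; exists (fun u => (u == w)%:R) => v hv.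
rewrite -[LHS](sum_delta (fun u => Delta d u v) (uniq_verts d h) hw).
by apply: eq_bigr => u _; rewrite mulrC.
Qed.

Lemma numqK_int (x : rat) : (exists z : int, x = z%:~R) -> (numq x)%:~R = x.
Proof. by case=> z ->; rewrite numq_int. Qed.

Lemma ff_int d h l u : (2 < d)%N -> (0 < h)%N -> size l = h ->
  exists z : int, (ee d h)%:R * ff d h l u = z%:~R.
Proof.
move=> hd hh sl.
have hle : (lcp u l <= h)%N by rewrite -sl lcp_le2.
have [z hz] := aa_int hd hh hle.
exists (z * (NN d (h.+1 - size u))%:Z).
by rewrite /ff mulrA hz intrM.
Qed.

Lemma inL_leaf d h l : (2 < d)%N -> (0 < h)%N -> l \in tree_verts d h -> size l = h ->
  in_Lambda d h (fun v => (ee d h)%:Z * (v == l)%:R).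
Proof.
move=> hd hh hl sl.
exists (fun u => numq ((ee d h)%:R * ff d h l u)) => v hv.
apply: (@intr_inj rat).
rewrite rmorph_sum /=.
have hq : forall u, ((numq ((ee d h)%:R * ff d h l u))%:~R : rat) = (ee d h)%:R * ff d h l u.
  by move=> u; apply: numqK_int; apply: ff_int.
under eq_bigr => u _ do rewrite intrM hq -mulrA.
rewrite -mulr_sumr green_row // intrM -pmulrn.
by case: (v == l).
Qed.

Lemma if_rcons (A : Type) (w : seq nat) x (a b : A) :
  (if rcons w x is [::] then a else b) = b.
Proof. by case: w. Qed.

Lemma inL_delta d h w : (2 < d)%N -> (0 < h)%N -> w \in tree_verts d h ->
  in_Lambda d h (fun v => (ee d h)%:Z * (v == w)%:R).
Proof.
move=> hd hh.
suff: forall n w, (h - size w <= n)%N -> w \in tree_verts d h ->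
  in_Lambda d h (fun v => (ee d h)%:Z * (v == w)%:R).
  by move=> H; apply: (H (h - size w)%N).
elim=> [|n IH] {}w hn hw.
  apply: inL_leaf => //; move: hw; rewrite mem_verts => /andP[_ hs]; lia.
have hw' := hw; rewrite mem_verts in hw'; case/andP: hw' => vw sw.
case: (ltnP (size w) h) => hlt; last first.
  by apply: inL_leaf => //; apply/eqP; rewrite eqn_leq sw hlt.
set c0 := rcons w 0%N.
have hc0 : c0 \in tree_verts d h.
  have : c0 \in children d h w.
    apply/mapP; exists 0%N => //; rewrite mem_iota /nch hlt add0n.
    by case: (w); lia.
  by rewrite children_mem // => /andP[].
have hch : forall u, u \in children d h c0 -> u \in tree_verts d h /\ (h - size u <= n)%N.
  move=> u hu; move: (hu); rewrite children_mem // => /andP[hu' _]; split => //.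
  move: hu => /mapP [i _ ->]; rewrite size_rcons /c0 size_rcons; lia.
have E : forall v, v \in tree_verts d h ->
  (ee d h)%:Z * (v == w)%:R =
  d%:Z * ((ee d h)%:Z * (v == c0)%:R)
  + (-1) * (\sum_(u <- children d h c0) (ee d h)%:Z * (v == u)%:R)
  + (- (ee d h)%:Z) * Delta d c0 v.
  move=> v hv.
  have := local (fun u => ((u == v)%:R : int)) hc0.
  rewrite if_rcons /c0 par_rcons -/c0.
  rewrite (eq_bigr (fun u => Delta d u c0 * (u == v)%:R)); last first.
    by move=> u _; rewrite intz mulrC.
  rewrite sum_delta ?uniq_verts // Delta_sym => ->.
  rewrite -mulr_sumr !(eq_sym v) natz.
  under eq_bigr => i _ do rewrite eq_sym.
  ring.
apply: (@inL_ext d h (fun v => d%:Z * ((ee d h)%:Z * (v == c0)%:R)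
  + (-1) * (\sum_(u <- children d h c0) (ee d h)%:Z * (v == u)%:R)
  + (- (ee d h)%:Z) * Delta d c0 v) _ (fun v hv => esym (E v hv))).
apply: inL_add; first apply: inL_add.
- apply: inL_scale; apply: IH; [rewrite /c0 size_rcons; lia | exact: hc0].
- apply: inL_scale; apply: inL_sum => u hu.
  by have [h1 h2] := hch _ hu; apply: IH.
- by apply: inL_scale; apply: inL_row.
Qed.

Local Close Scope ring_scope.
Local Open Scope ring_scope.

Lemma annih d h : (2 < d)%N -> (0 < h)%N -> annihilates d h (ee d h).
Proof.
move=> hd hh x.
apply: (@inL_ext d h (fun v => \sum_(w <- tree_verts d h) x w * ((ee d h)%:Z * (v == w)%:R))).
  move=> v hv.
  rewrite (eq_bigr (fun w => ((ee d h)%:Z * x w) * (w == v)%:R)); last first.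
    by move=> w _; rewrite eq_sym; ring.
  by rewrite sum_delta ?uniq_verts.
apply: inL_sum => w hw; apply: inL_scale; exact: inL_delta.
Qed.

Lemma int_div (e n : nat) (z : int) : (0 < n)%N -> (e%:R : rat) / n%:R = z%:~R -> (n %| e)%N.
Proof.
move=> hn he.
have nn : (n%:R : rat) != 0 by rewrite pnatr_eq0 -lt0n.
have : (e%:R : rat) = z%:~R * n%:R by rewrite -he divfK.
rewrite -[e%:R]/((e%:Z)%:~R) -[n%:R]/((n%:Z)%:~R) -intrM => /(@intr_inj rat) E.
apply/dvdnP; exists `|z|%N.
by have := congr1 absz E; rewrite abszM.
Qed.

Definition lm (h m : nat) : seq nat := nseq m 0%N ++ nseq (h - m) 1%N.

Lemma lm_size h m : (m <= h)%N -> size (lm h m) = h.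
Proof. by move=> hm; rewrite /lm size_cat !size_nseq; lia. Qed.

Lemma lm_mem d h m : (2 < d)%N -> (0 < h)%N -> (m <= h)%N -> lm h m \in tree_verts d h.
Proof.
move=> hd hh hm; rewrite mem_verts lm_size // leqnn andbT /lm.
case: m hm => [|m] hm.
  rewrite subn0; case: h hh {hm} => // h _ /=.
  rewrite all_nseq; apply/andP; split; first lia.
  by apply/orP; right; lia.
rewrite /= all_cat !all_nseq; apply/and3P; split; first lia.
  by apply/orP; right; lia.
by apply/orP; right; lia.
Qed.

Lemma lcp_lm h m : (m <= h)%N -> lcp (nseq h 0%N) (lm h m) = m.
Proof.
rewrite /lm; elim: m h => [|m IH] [|h] //= hm.
by rewrite IH.
Qed.

Lemma key d h e' (c : seq nat -> int) l : (2 < d)%N -> (0 < h)%N ->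
  l \in tree_verts d h -> size l = h ->
  (forall v, v \in tree_verts d h ->
     (e'%:Z * (v == nseq h 0%N)%:R) = \sum_(u <- tree_verts d h) c u * Delta d u v) ->
  (c l)%:~R = e'%:R * aa d h (lcp (nseq h 0%N) l).
Proof.
move=> hd hh hl sl hc.
have h0 : nseq h 0%N \in tree_verts d h.
  have := lm_mem hd hh (leqnn h); by rewrite /lm subnn cats0.
set S := \sum_(v <- tree_verts d h) ((e'%:Z * (v == nseq h 0%N)%:R)%:~R : rat) * ff d h l v.
have S1 : S = e'%:R * aa d h (lcp (nseq h 0%N) l).
  rewrite /S (eq_bigr (fun v => (e'%:R * ff d h l v) * (v == nseq h 0%N)%:R)); last first.
    move=> v _; rewrite intrM -pmulrn.
    by case: (v == _); rewrite /= ?mulr1 ?mulr0 ?mul0r ?mul1r ?mulr1n ?mulr0n.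
  rewrite sum_delta ?uniq_verts // /ff size_nseq.
  by rewrite (_ : (h.+1 - h = 1)%N) ?NQS ?NQ0 ?mulr0 ?add0r ?mulr1 //; lia.
have S2 : S = (c l)%:~R.
  rewrite /S big_seq_cond.
  rewrite (eq_bigr (fun v => \sum_(u <- tree_verts d h) (c u)%:~R * (ff d h l v * (Delta d v u)%:~R))); last first.
    move=> v /andP[hv _]; rewrite hc // rmorph_sum mulr_suml.
    by apply: eq_bigr => u _; rewrite rmorphM /= Delta_sym; ring.
  rewrite -big_seq_cond exchange_big /=.
  rewrite big_seq_cond (eq_bigr (fun u => (c u)%:~R * (u == l)%:R)); last first.
    by move=> u /andP[hu _]; rewrite -mulr_sumr green_row.
  by rewrite -big_seq_cond sum_delta ?uniq_verts.
by rewrite -S2 S1.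
Qed.

Lemma minimal d h e' : (2 < d)%N -> (0 < h)%N -> (0 < e')%N -> annihilates d h e' ->
  (ee d h %| e')%N.
Proof.
move=> hd hh he H.
have [c hc] := H (fun v => (v == nseq h 0%N)%:R).
have K : forall m, (m <= h)%N -> exists z : int, e'%:R * aa d h m = z%:~R.
  move=> m hm; exists (c (lm h m)).
  rewrite -{1}(lcp_lm hm); symmetry; apply: key => //.
    exact: lm_mem.
  exact: lm_size.
have A : (d * (d.-1) ^ h * NN d h.+1 %| e')%N.
  have [z hz] := K 0%N (leq0n h).
  apply: (@int_div _ _ z); first by rewrite !muln_gt0 expn_gt0 NN_gt0 //; lia.
  by rewrite -hz /= !natrM natrX -/(NQ d h.+1) mul1r.
have B : forall m, (m < h)%N -> (NN d (h.+1 - m) * NN d (h - m) %| e')%N.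
  move=> m hm.
  have [z1 hz1] := K m.+1 hm.
  have [z0 hz0] := K m (ltnW hm).
  apply: (@int_div _ _ (z1 - z0)); first by rewrite muln_gt0 !NN_gt0 //; lia.
  by rewrite intrB -hz1 -hz0 /= mulrDr addrAC subrr add0r natrM mul1r.
clear hc H K c.
have hq : ((d.-1) ^ h %| e')%N.
  by apply: dvdn_trans A; rewrite -mulnA dvdn_mull // dvdn_mulr.
have hL : (LL d h %| e')%N.
  apply: lcm_seq_dvd => x; rewrite inE => /orP[/eqP ->|/mapP [k hk ->]].
    by rewrite theta_NN //; apply: dvdn_trans A; rewrite mulnAC dvdn_mulr.
  move: hk; rewrite mem_iota => hk.
  have [hk1 hk2] : (0 < k)%N /\ (k <= h)%N by case: (h) hh hk => // h' _ /=; lia.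
  have hk3 : (h - k < h)%N by lia.
  have := B (h - k)%N hk3.
  rewrite (_ : (h.+1 - (h - k) = k.+1)%N); last by lia.
  rewrite (_ : (h - (h - k) = k)%N); last by lia.
  by rewrite theta_NN // => /(dvdn_trans (dvdn_mull _ (dvdnn _))).
rewrite /ee Gauss_dvd ?hq ?hL //.
apply: coprimeXl; apply: coprime_lcm_seq => x; rewrite inE => /orP[/eqP ->|/mapP [k hk ->]].
  rewrite coprimeMr theta_NN // coprime_NN // andbT.
  by rewrite -{2}(prednK (_ : (0 < d)%N)) ?coprimenS //; lia.
move: hk; rewrite mem_iota theta_NN // => hk; apply: coprime_NN => //.
by case: (h) hh hk => // h' _ /=; lia.
Qed.

Local Close Scope ring_scope.
Unset Implicit Arguments.
Theorem theorem2p3 (d h : nat) (hd : 3 <= d) (hh : 1 <= h) :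
  is_exponent_G d h
    ((d.-1) ^ h * lcm_seq (d * theta d h.+1 :: [seq theta d k | k <- iota 2 h.-1])).
Proof.
have -> : ((d.-1) ^ h * lcm_seq (d * theta d h.+1 :: [seq theta d k | k <- iota 2 h.-1]))%N = ee d h by [].
split.
  rewrite /ee muln_gt0 expn_gt0 (_ : (0 < d.-1)%N) /=; last by lia.
  apply: lcm_seq_gt0 => x; rewrite inE => /orP[/eqP ->|/mapP [k hk ->]].
    by rewrite theta_NN // muln_gt0 NN_gt0 // andbT; lia.
  move: hk; rewrite mem_iota theta_NN // => hk; apply: NN_gt0.
  by case: (h) hh hk => // h' _ /=; lia.
split; first exact: annih.
move=> e' he' H; apply: dvdn_leq => //; exact: minimal.
Qed.
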